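(* Let $\mathbb W=(W,I,\preccurlyeq,\circ,{}^\sim,{}^-)$ be a DInFL-frame and let $\mathsf{Up}(W,\preccurlyeq)$ be the set of all upsets of $(W,\preccurlyeq)$. For $U\in\mathsf{Up}(W,\preccurlyeq)$ define ${\sim}U=\{w\in W\mid w^-\notin U\}$ and $-U=\{w\in W\mid w^\sim\notin U\}$. Then $\mathsf{Up}(W,\preccurlyeq)$ is closed under $\cap,\cup,\circ,{\sim},-$, contains $I$, and $\mathbb W^+=(\mathsf{Up}(W,\preccurlyeq),\cap,\cup,\circ,I,\sim,-)$ is a distributive InFL-algebra (DInFL-algebra).
   Context: For a set $W$ and a map $\circ:W\times W\to\mathcal P(W)$, extend $\circ$ to subsets by $U\circ V=\bigcup\{a\circ b\mid a\in U,\ b\in V\}$, with $x\circ V=\{x\}\circ V$ and $U\circ y=U\circ\{y\}$. We write $x^{\sim-}$ for $(x^\sim)^-$, etc. A DInFL-frame is a tuple $\mathbb W=(W,I,\preccurlyeq,\circ,{}^\sim,{}^-)$ where $W$ is a set, $I\subseteq W$, $\preccurlyeq$ is a partial order on $W$, $\circ:W\times W\to\mathcal P(W)$, and ${}^\sim,{}^-:W\to W$ are functions, such that for all $u,v,x,y,z\in W$: (F1) $x\preccurlyeq y$ iff $y\in I\circ x$ iff $y\in x\circ I$; (F2) if $x\preccurlyeq y$ and $x\in I$ then $y\in I$; (F3) if $x\preccurlyeq y$ and $x\in u\circ v$ then $y\in u\circ v$; (F4) $(x\circ y)\circ z=x\circ(y\circ z)$; (F5) $z^\sim\in x\circ y$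 iff $y^-\in z\circ x$; (F6) $x^{\sim-}\preccurlyeq x$ and $x^{-\sim}\preccurlyeq x$. An InFL-algebra is a structure $(A,\wedge,\vee,\cdot,1,\sim,-)$ with $(A,\wedge,\vee)$ a lattice, $(A,\cdot,1)$ a monoid, and for all $a,b,c$: $a\cdot b\leqslant c\iff a\leqslant -(b\cdot{\sim}c)\iff b\leqslant{\sim}(-c\cdot a)$. A DInFL-algebra is an InFL-algebra whose lattice reduct is distributive. *)

(* Defs.v *)
Set Implicit Arguments.

Definition pset (W : Type) := W -> Prop.

Definition circ_set {W : Type} (circ : W -> W -> pset W) (U V : pset W) : pset W :=
  fun w => exists a b, U a /\ V b /\ circ a b w.

Definition is_partial_order {W : Type} (le : W -> W -> Prop) : Prop :=
  (forall x, le x x) /\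
  (forall x y, le x y -> le y x -> x = y) /\
  (forall x y z, le x y -> le y z -> le x z).

Definition singleton {W : Type} (x : W) : pset W := fun w => w = x.

Definition DInFL_frame (W : Type) (I : pset W) (le : W -> W -> Prop)
    (circ : W -> W -> pset W) (tl mi : W -> W) : Prop :=
  is_partial_order le /\
  (forall x y, (le x y <-> circ_set circ I (singleton x) y) /\
               (circ_set circ I (singleton x) y <-> circ_set circ (singleton x) I y)) /\
  (forall x y, le x y -> I x -> I y) /\
  (forall x y u v, le x y -> circ u v x -> circ u v y) /\
  (forall x y z, circ_set circ (circ x y) (singleton z)
                 = circ_set circ (singleton x) (circ y z)) /\
  (forall x y z, circ x y (tl z) <-> circ z x (mi y)) /\
  (forall x, le (mi (tl x)) x /\ le (tl (mi x)) x).

Definition is_upset {W : Type} (le : W -> W -> Prop) (U : pset W) : Prop :=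
  forall x y, le x y -> U x -> U y.

Definition set_cap {W : Type} (U V : pset W) : pset W := fun w => U w /\ V w.
Definition set_cup {W : Type} (U V : pset W) : pset W := fun w => U w \/ V w.

Definition set_tilde {W : Type} (mi : W -> W) (U : pset W) : pset W :=
  fun w => ~ U (mi w).
Definition set_minus {W : Type} (tl : W -> W) (U : pset W) : pset W :=
  fun w => ~ U (tl w).

Definition InFL_algebra_on {A : Type} (S : A -> Prop)
    (meet join mul : A -> A -> A) (one : A) (tl mi : A -> A) : Prop :=
  let le a b := meet a b = a in
  S one /\
  (forall a b, S a -> S b -> S (meet a b)) /\
  (forall a b, S a -> S b -> S (join a b)) /\
  (forall a b, S a -> S b -> S (mul a b)) /\
  (forall a, S a -> S (tl a)) /\
  (forall a, S a -> S (mi a)) /\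
  (forall a b c, S a -> S b -> S c -> meet a (meet b c) = meet (meet a b) c) /\
  (forall a b c, S a -> S b -> S c -> join a (join b c) = join (join a b) c) /\
  (forall a b, S a -> S b -> meet a b = meet b a) /\
  (forall a b, S a -> S b -> join a b = join b a) /\
  (forall a b, S a -> S b -> meet a (join a b) = a) /\
  (forall a b, S a -> S b -> join a (meet a b) = a) /\
  (forall a b c, S a -> S b -> S c -> mul a (mul b c) = mul (mul a b) c) /\
  (forall a, S a -> mul one a = a /\ mul a one = a) /\
  (forall a b c, S a -> S b -> S c ->
     (le (mul a b) c <-> le a (mi (mul b (tl c)))) /\
     (le a (mi (mul b (tl c))) <-> le b (tl (mul (mi c) a)))).

Definition DInFL_algebra_on {A : Type} (S : A -> Prop)
    (meet join mul : A -> A -> A) (one : A) (tl mi : A -> A) : Prop :=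
  InFL_algebra_on S meet join mul one tl mi /\
  (forall a b c, S a -> S b -> S c ->
     meet a (join b c) = join (meet a b) (meet a c)).

(* Main.v *)
Require Import Defs.
From Stdlib Require Import Classical FunctionalExtensionality PropExtensionality.

Lemma pext {W : Type} (A B : pset W) : (forall w, A w <-> B w) -> A = B.
Proof.
  intro H; apply functional_extensionality; intro w;
  apply propositional_extensionality; apply H.
Qed.

Lemma cap_eq_iff {W : Type} (A B : pset W) :
  set_cap A B = A <-> (forall w, A w -> B w).
Proof.
  split.
  - intros H w Hw. rewrite <- H in Hw. destruct Hw; auto.
  - intro H. apply pext. intro w. unfold set_cap. split; [tauto|]. intro; split; auto.
Qed.

Lemma tfae3 (P1 P2 P3 : Prop) : (P1 -> P2) -> (P2 -> P1) -> (P1 -> P3) -> (P3 -> P1) ->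
  (P1 <-> P2) /\ (P2 <-> P3).
Proof. tauto. Qed.

Ltac splitr n := match n with 0 => idtac | S ?m => split; [ | splitr m] end.

Theorem mainTheorem4 (W : Type) (I : pset W) (le : W -> W -> Prop)
    (circ : W -> W -> pset W) (tl mi : W -> W) :
  DInFL_frame I le circ tl mi ->
  DInFL_algebra_on (is_upset le) (@set_cap W) (@set_cup W) (circ_set circ) I
    (set_tilde mi) (set_minus tl).
Proof.
  intros [[Hrefl [Hanti Htrans]] [F1 [F2 [F3 [F4 [F5 F6]]]]]].
  assert (LC : forall x y, le x y <-> exists i, I i /\ circ x i y).
  { intros x y. destruct (F1 x y) as [A B]. rewrite A, B. unfold circ_set, singleton.
    split.
    - intros [a [b [-> [Hb Hc]]]]. eauto.
    - intros [i [Hi Hc]]. exists x, i. auto. }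
  assert (LC' : forall x y, le x y <-> exists i, I i /\ circ i x y).
  { intros x y. destruct (F1 x y) as [A B]. rewrite A. unfold circ_set, singleton.
    split.
    - intros [a [b [Ha [-> Hc]]]]. eauto.
    - intros [i [Hi Hc]]. exists i, x. auto. }
  assert (INV1 : forall z, mi (tl z) = z).
  { intro z. apply Hanti; [apply F6|].
    destruct (proj1 (LC' _ _) (Hrefl (tl z))) as [i [Hi Hc]].
    apply LC. exists i. split; auto. apply (proj1 (F5 i (tl z) z)). auto. }
  assert (INV2 : forall z, tl (mi z) = z).
  { intro y. apply Hanti; [apply F6|].
    destruct (proj1 (LC _ _) (Hrefl (mi y))) as [i [Hi Hc]].
    apply LC'. exists i. split; auto. apply (proj2 (F5 i y (mi y))). auto. }
  assert (AM : forall x y, le x y -> le (mi y) (mi x)).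
  { intros x y H. destruct (proj1 (LC' _ _) H) as [i [Hi Hc]].
    apply LC. exists i. split; auto. apply (proj1 (F5 i x (mi y))). rewrite INV2. auto. }
  assert (AT : forall x y, le x y -> le (tl y) (tl x)).
  { intros x y H. destruct (proj1 (LC _ _) H) as [i [Hi Hc]].
    apply LC'. exists i. split; auto. apply (proj2 (F5 i (tl y) x)). rewrite INV1. auto. }
  split; [unfold InFL_algebra_on; cbv zeta; splitr 14|].
  - intros x y H1 H2. eauto.
  - intros a b Ha Hb x y Hxy [H1 H2]. split; eauto.
  - intros a b Ha Hb x y Hxy [H1|H2]; [left|right]; eauto.
  - intros a b Ha Hb x y Hxy [u [v [Hu [Hv Hc]]]]. exists u, v. eauto.
  - intros a Ha x y Hxy Hx Hy. apply Hx. eapply Ha; [apply AM; eauto|auto].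
  - intros a Ha x y Hxy Hx Hy. apply Hx. eapply Ha; [apply AT; eauto|auto].
  - intros a b c _ _ _. apply pext. unfold set_cap. tauto.
  - intros a b c _ _ _. apply pext. unfold set_cup. tauto.
  - intros a b _ _. apply pext. unfold set_cap. tauto.
  - intros a b _ _. apply pext. unfold set_cup. tauto.
  - intros a b _ _. apply pext. unfold set_cap, set_cup. tauto.
  - intros a b _ _. apply pext. unfold set_cap, set_cup. tauto.
  -
    intros a b c _ _ _. apply pext. intro w. unfold circ_set. split.
    + intros [x [d [Hx [[y [z [Hy [Hz Hd]]]] Hw]]]].
      assert (H : circ_set circ (circ x y) (singleton z) w).
      { rewrite F4. exists x, d. repeat split; auto. }
      destruct H as [e [z' [He [Hz' Hw']]]]. unfold singleton in Hz'. subst z'.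
      exists e, z. split; [exists x, y; auto|]. auto.
    + intros [e [z [[x [y [Hx [Hy He]]]] [Hz Hw]]]].
      assert (H : circ_set circ (singleton x) (circ y z) w).
      { rewrite <- F4. exists e, z. repeat split; auto. }
      destruct H as [x' [d [Hx' [Hd Hw']]]]. unfold singleton in Hx'. subst x'.
      exists x, d. split; auto. split; [exists y, z; auto|auto].
  - intros a Ha. split; apply pext; intro w; unfold circ_set; split.
    + intros [i [u [Hi [Hu Hc]]]]. eapply Ha; [|exact Hu]. apply LC'. eauto.
    + intro Hw. destruct (proj1 (LC' _ _) (Hrefl w)) as [i [Hi Hc]]. exists i, w. auto.
    + intros [u [i [Hu [Hi Hc]]]]. eapply Ha; [|exact Hu]. apply LC. eauto.
    + intro Hw. destruct (proj1 (LC _ _) (Hrefl w)) as [i [Hi Hc]]. exists w, i. auto.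
  - intros U V Z HU HV HZ. rewrite !cap_eq_iff; unfold set_minus, set_tilde, circ_set.
    apply tfae3.
    + intros H u Hu [v [x [Hv [Hx Hc]]]]. apply Hx. apply H. exists u, v.
      repeat split; auto. apply (proj1 (F5 v x u)). auto.
    + intros H w [u [v [Hu [Hv Hc]]]]. apply NNPP. intro Hn. apply (H u Hu).
      exists v, (tl w). repeat split; auto. rewrite INV1; auto.
      apply (proj2 (F5 v (tl w) u)). rewrite INV1. auto.
    + intros H v Hv [y [u [Hy [Hu Hc]]]]. apply Hy, H. exists u, v.
      repeat split; auto. apply (proj2 (F5 u v y)). auto.
    + intros H w [u [v [Hu [Hv Hc]]]]. apply NNPP. intro Hn. apply (H v Hv).
      exists (mi w), u. split; [rewrite INV2; auto|]. split; auto.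
      apply (proj1 (F5 u v (mi w))). rewrite INV2. auto.
  - intros a b c _ _ _. apply pext. unfold set_cap, set_cup. tauto.
Qed.
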